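(* Let $N\in\mathbb{N}$ and real constants $C_{\alpha_1,\ldots,\alpha_k}$ ($\alpha_1+\cdots+\alpha_k=N$) be given, and let $P(b_2,\ldots,b_k):=\sum_{\alpha_1+\cdots+\alpha_k=N}C_{\alpha_1,\ldots,\alpha_k}b_2^{\alpha_2}b_3^{\alpha_3}\cdots b_k^{\alpha_k}$. Suppose there exist vectors $e_1=1=\sum_{r=1}^mI_r$, $e_j=\sum_{r=1}^na_{jr}I_r$ ($a_{jr}\in\mathbb{C}$, $j=2,\ldots,k$) in $\mathbb{A}_n^m$, linearly independent over $\mathbb{R}$, satisfying $$\sum_{\alpha_1+\cdots+\alpha_k=N}C_{\alpha_1,\ldots,\alpha_k}\,e_2^{\alpha_2}e_3^{\alpha_3}\cdots e_k^{\alpha_k}=0.$$ If $P(b_2,\ldots,b_k)\ne0$ for all real $b_2,\ldots,b_k$, then $f_u(E_k)=\mathbb{C}$ for all $u=1,\ldots,m$, where $E_k$ is the real linear span of $e_1,\ldots,e_k$.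
   Context: Fix integers $1\le m\le n$ and $2\le k\le 2n$. $\mathbb{A}_n^m$ is an $n$-dimensional commutative associative algebra with unit over $\mathbb{C}$ having a basis $\{I_r\}_{r=1}^n$ with the multiplication rules: (1) for $r,s\in\{1,\ldots,m\}$: $I_rI_s=0$ if $r\ne s$ and $I_rI_r=I_r$; (2) for $r,s\in\{m+1,\ldots,n\}$: $I_rI_s=\sum_{p=\max\{r,s\}+1}^n\Upsilon^s_{r,p}I_p$ with $\Upsilon^s_{r,p}\in\mathbb{C}$; (3) for each $s\in\{m+1,\ldots,n\}$ there is a unique $u_s\in\{1,\ldots,m\}$ such that for all $r\in\{1,\ldots,m\}$: $I_rI_s=I_s$ if $r=u_s$ and $I_rI_s=0$ otherwise. The unit is $\sum_{u=1}^mI_u$. For $u=1,\ldots,m$, $f_u:\mathbb{A}_n^m\to\mathbb{C}$ is the linear functional $f_u(\sum_r\lambda_rI_r)=\lambda_u$, and $f_u(E_k):=\{f_u(\zeta):\zeta\in E_k\}$. *)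

(* Defs.v *)
(* The complex field C is taken to be an arbitrary
   numClosedFieldType (e.g. algC, or the complex numbers); "real" means
   x \is Num.real. *)
From HB Require Import structures.
From mathcomp Require Import all_boot all_order all_algebra.
Set Implicit Arguments. Unset Strict Implicit. Unset Printing Implicit Defensive.
Import Order.TTheory GRing.Theory Num.Theory.
Local Open Scope ring_scope.

Section Algebra.
Variables (C : numClosedFieldType) (n m : nat).
(* Indices are 0-based: I_r for r : 'I_n; r < m are the idempotents. *)
Variable (Ups : 'I_n -> 'I_n -> 'I_n -> C). (* Ups s r p = Upsilon^s_{r,p} *)
Variable (us : 'I_n -> 'I_n).                (* us s = u_s for s >= m *)

(* elements of A_n^m are coordinate row vectors w.r.t. the basis I_r *)
Definition basisI (r : 'I_n) : 'rV[C]_n := delta_mx 0 r.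

Definition Iprod (r s : 'I_n) : 'rV[C]_n :=
  if (r < m)%N && (s < m)%N then (if r == s then basisI r else 0)
  else if (r < m)%N then (if us s == r then basisI s else 0)
  else if (s < m)%N then (if us r == s then basisI r else 0)
  else \sum_(p : 'I_n | (maxn r s < p)%N) Ups s r p *: basisI p.

Definition amul (x y : 'rV[C]_n) : 'rV[C]_n :=
  \sum_(r : 'I_n) \sum_(s : 'I_n) (x 0 r * y 0 s) *: Iprod r s.

Definition aunit : 'rV[C]_n := \sum_(u : 'I_n | (u < m)%N) basisI u.

Definition apow (x : 'rV[C]_n) (a : nat) : 'rV[C]_n := iter a (amul x) aunit.

Definition fu (u : 'I_n) (x : 'rV[C]_n) : C := x 0 u.

Definition inEk (k : nat) (e : 'I_k -> 'rV[C]_n) (x : 'rV[C]_n) : Prop :=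
  exists t : 'I_k -> C, (forall j, t j \is Num.real) /\ x = \sum_(j : 'I_k) t j *: e j.
End Algebra.

Definition multi_ok (k N : nat) (al : {ffun 'I_k -> 'I_N.+1}) : bool :=
  (\sum_(j : 'I_k) (al j : nat) == N)%N.

(* Main.v *)
Require Import Defs.
From HB Require Import structures.
From mathcomp Require Import all_boot all_order all_algebra.
From mathcomp Require Import ring.
Import Order.TTheory GRing.Theory Num.Theory.
Local Open Scope ring_scope.

Section Aux.
Variables (C : numClosedFieldType) (n m : nat).
Variable (Ups : 'I_n -> 'I_n -> 'I_n -> C).
Variable (us : 'I_n -> 'I_n).

Lemma basisI_u (r u : 'I_n) : basisI C r 0 u = (r == u)%:R :> C.
Proof. by rewrite /basisI mxE eqxx eq_sym. Qed.

Lemma Iprod_u (r s u : 'I_n) : (u < m)%N ->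
  Iprod m Ups us r s 0 u = ((r == u) && (s == u))%:R.
Proof.
move=> um; rewrite /Iprod.
have nu : forall x : 'I_n, (m <= x)%N -> (x == u) = false.
  by move=> x xm; apply/eqP => xu; move: xm; rewrite xu leqNgt um.
case: (ltnP r m) => rm; case: (ltnP s m) => sm /=.
- case: eqP => [<-|/eqP rs]; first by rewrite basisI_u andbb.
  rewrite mxE; case: (r =P u) => [ru|] /=; last by [].
  by case: (s =P u) => // su; move: rs; rewrite ru su eqxx.
- by rewrite (nu s sm) andbF; case: ifP => _; rewrite ?basisI_u ?(nu s sm) ?mxE.
- by rewrite (nu r rm); case: ifP => _; rewrite ?basisI_u ?(nu r rm) ?mxE.
- rewrite (nu r rm) /= summxE big1 // => p /= Hp; rewrite mxE basisI_u nu ?mulr0 // => /=.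
  exact: leq_trans rm (ltnW (leq_ltn_trans (leq_maxl _ _) Hp)).
Qed.

Lemma amul_u (x y : 'rV[C]_n) (u : 'I_n) : (u < m)%N ->
  amul m Ups us x y 0 u = x 0 u * y 0 u.
Proof.
move=> um; rewrite /amul summxE.
rewrite (eq_bigr (fun r => (r == u)%:R * (x 0 r * y 0 u))) => [|r _].
  rewrite (bigD1 u) //= big1 => [|r /negPf ->]; last by rewrite mul0r.
  by rewrite eqxx mul1r addr0.
rewrite summxE (bigD1 u) //= big1 => [|s /negPf su].
  by rewrite addr0 mxE Iprod_u // eqxx andbT; case: (r == u); rewrite ?mulr1 ?mulr0 ?mul1r ?mul0r.
by rewrite mxE Iprod_u // su andbF mulr0.
Qed.

Lemma aunit_u (u : 'I_n) : (u < m)%N -> aunit C n m 0 u = 1.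
Proof.
move=> um; rewrite /aunit summxE (bigD1 u) //= big1 => [|i /andP[_ iu]].
  by rewrite basisI_u eqxx addr0.
by rewrite basisI_u (negPf iu).
Qed.

Lemma apow_u (x : 'rV[C]_n) a (u : 'I_n) : (u < m)%N ->
  apow m Ups us x a 0 u = x 0 u ^+ a.
Proof.
move=> um; elim: a => [|a IH]; first by rewrite /apow /= aunit_u.
by rewrite /apow iterS -/(apow _ _ _ _ _) amul_u // IH exprS.
Qed.
End Aux.

Theorem theorem4 (C : numClosedFieldType) (n m k N : nat)
  (Ups : 'I_n -> 'I_n -> 'I_n -> C) (us : 'I_n -> 'I_n)
  (Hm1 : (1 <= m)%N) (Hmn : (m <= n)%N) (Hk2 : (2 <= k)%N) (Hkn : (k <= 2 * n)%N)
  (Hus : forall s : 'I_n, (m <= s)%N -> (us s < m)%N)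
  (Hcomm : forall x y : 'rV[C]_n, amul m Ups us x y = amul m Ups us y x)
  (Hassoc : forall x y z : 'rV[C]_n,
      amul m Ups us x (amul m Ups us y z) = amul m Ups us (amul m Ups us x y) z)
  (c : {ffun 'I_k -> 'I_N.+1} -> C)
  (Hc : forall al, multi_ok al -> c al \is Num.real)
  (e : 'I_k -> 'rV[C]_n)
  (He1 : forall j : 'I_k, nat_of_ord j = 0%N -> e j = @aunit C n m)
  (Hind : forall t : 'I_k -> C, (forall j, t j \is Num.real) ->
      \sum_(j : 'I_k) t j *: e j = 0 -> forall j, t j = 0)
  (Heq : \sum_(al | multi_ok al) c al *:
           \big[amul m Ups us / @aunit C n m]_(j : 'I_k | nat_of_ord j != 0%N)
              apow m Ups us (e j) (al j) = 0)
  (HP : forall b : 'I_k -> C, (forall j, b j \is Num.real) ->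
      \sum_(al | multi_ok al) c al *
        \prod_(j : 'I_k | nat_of_ord j != 0%N) b j ^+ (al j) != 0) :
  forall u : 'I_n, (u < m)%N ->
    forall z : C, exists x : 'rV[C]_n, @inEk C n k e x /\ fu u x = z.
Proof.
move=> u um z.
have Hbig : forall al : {ffun 'I_k -> 'I_N.+1},
  (\big[amul m Ups us / @aunit C n m]_(j : 'I_k | nat_of_ord j != 0%N)
     apow m Ups us (e j) (al j)) 0 u =
  \prod_(j : 'I_k | nat_of_ord j != 0%N) e j 0 u ^+ (al j).
  move=> al; rewrite (big_morph (fun v : 'rV[C]_n => v 0 u) (id1 := 1) (op1 := *%R)).
  - by apply: eq_bigr => j _; rewrite apow_u.
  - by move=> x y; rewrite amul_u.
  - by rewrite aunit_u.
have Heq' : \sum_(al | multi_ok al) c al *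
   \prod_(j : 'I_k | nat_of_ord j != 0%N) e j 0 u ^+ (al j) = 0.
  have H := congr1 (fun v : 'rV[C]_n => v 0 u) Heq; rewrite /= summxE mxE in H.
  rewrite -[RHS]H; by apply: eq_bigr => al _; rewrite mxE Hbig.
have k0 : (0 < k)%N by apply: leq_trans Hk2.
pose j0 : 'I_k := Ordinal k0.
have e0 : e j0 0 u = 1 by rewrite He1 // aunit_u.
case: (boolP [exists j : 'I_k, (nat_of_ord j != 0%N) && (e j 0 u \notin Num.real)]).
- case/existsP => j /andP[jn0 wnr].
  set w := e j 0 u in wnr.
  have Imw : 'Im w != 0 by apply/eqP => /Creal_ImP; rewrite (negPf wnr).
  pose t1 := 'Im z / 'Im w.
  pose t0 := 'Re z - t1 * 'Re w.
  have jj0 : j != j0 by apply/eqP => jj; move: jn0; rewrite jj.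
  pose t := fun i : 'I_k => (if i == j0 then t0 else 0) + (if i == j then t1 else 0).
  exists (\sum_(i : 'I_k) t i *: e i); split.
    exists t; split => // i; rewrite /t.
    by apply: rpredD; case: ifP => _; rewrite ?rpred0 // /t0 /t1 ?(rpredB, rpredM, rpredV, Creal_Re, Creal_Im).
  rewrite /fu summxE.
  under eq_bigr do rewrite mxE /t mulrDl.
  rewrite big_split /= (bigD1 j0) //= big1 => [|i /negPf ->]; last by rewrite mul0r.
  rewrite (bigD1 j) //= big1 => [|i /negPf ->]; last by rewrite mul0r.
  rewrite eqxx e0 -/w !addr0 mulr1 /t0 /t1.
  have Hw := Crect w; have Hz := Crect z.
  move: Imw Hw Hz; generalize ('Re w) ('Im w) ('Re z) ('Im z) => a b c0 d bn -> ->.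
  by field.
- rewrite negb_exists => /forallP Hall; exfalso.
  suff Hr : forall j, (e j 0 u) \is Num.real by move: (HP _ Hr); rewrite Heq' eqxx.
  move=> j.
  case: (eqVneq (nat_of_ord j) 0%N) => [j0e|jn].
    by rewrite He1 // aunit_u.
  by move: (Hall j); rewrite jn /= negbK.
Qed.
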